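(* Assume (A1)–(A4), let $x_1\in R\mathbb{B}$, and run the Algorithm with $\eta>0$ and $\rho\in[0,\epsilon]$. Let $x_\rho^\star\in\arg\min_{x\in\mathcal{X}_\rho}\sum_{t=1}^Tf_t(x)$. Then $$\sum_{t=1}^T\big(f_t(x_t)-f_t(x_\rho^\star)\big)\le\frac{2R^2}{\eta}+\frac{\eta}{2}G_f^2T .$$
   Context: Let $d,T$ be positive integers and $[T]=\{1,\dots,T\}$. Write $\|\cdot\|$ for the Euclidean norm and $\mathbb{B}=\{x\in\mathbb{R}^d:\|x\|\le1\}$. For a closed convex set $\mathcal{Y}$, $\Pi_{\mathcal{Y}}$ is the Euclidean projection onto $\mathcal{Y}$. For $a\in\mathbb{R}$, $[a]_+=\max(a,0)$. Let $g:\mathbb{R}^d\to\mathbb{R}$ be convex with subdifferential $\partial g(x)$. Set $\mathcal{X}=\{x:g(x)\le0\}$, and for $\rho\ge0$ set $\mathcal{X}_\rho=\{x:g(x)\le-\rho\}$. Assumptions: (A1) there is $R>0$ with $\mathcal{X}\subseteq R\mathbb{B}$; (A2) $f_1,\dots,f_T:\mathbb{R}^d\to\mathbb{R}$ are convex and differentiable, and there is $G_f>0$ with $\|\nabla f_t(x)\|\le G_f$ for all $x\in R\mathbb{B}$ and all $t\in[T]$; (A3) there is $G_g>0$ with $\|s\|\le G_g$ for all $s\in\partial g(x)$ and all $x\in R\mathbb{B}$; (A4) there are $\sigma,\epsilon>0$ such that $\mathcal{X}'=\{x:g(x)=-\epsilon\}$ is nonempty and $\|s\|\ge\sigma$ for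 all $s\in\partial g(x)$ and all $x\in\mathcal{X}'$. Algorithm (OGD with Polyak feasibility steps). Inputs are $x_1\in\mathbb{R}^d$, $\eta>0$ and $\rho\ge0$. For $t=1,\dots,T$: - play $x_t$ and then receive $f_t$; the functions may be chosen adversarially and may depend on past actions; - query $g_t=g(x_t)$ and some $s_t\in\partial g(x_t)$; - set $y_t=x_t-\eta\nabla f_t(x_t)$; - if $s_t\ne0$, set $x_{t+1}=\Pi_{R\mathbb{B}}\big(y_t-\frac{[g_t+s_t^\top(y_t-x_t)+\rho]_+}{\|s_t\|^2}s_t\big)$; if $s_t=0$, set $x_{t+1}=\Pi_{R\mathbb{B}}(y_t)$. *)

(* Defs.v *)
From HB Require Import structures.
From mathcomp Require Import all_boot all_order all_algebra.
From mathcomp Require Import reals.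
Set Implicit Arguments. Unset Strict Implicit. Unset Printing Implicit Defensive.
Import Order.TTheory GRing.Theory Num.Theory.
Local Open Scope ring_scope.

Section Defs.
Variables (R : realType) (d : nat).
Notation vec := 'rV[R]_d.

Definition dot (u v : vec) : R := \sum_(i < d) u 0 i * v 0 i.
Definition enorm (u : vec) : R := Num.sqrt (dot u u).

Definition pos_part (a : R) : R := Num.max a 0.

Definition convex_fun (f : vec -> R) : Prop :=
  forall (x y : vec) (l : R), 0 <= l -> l <= 1 ->
    f (l *: x + (1 - l) *: y) <= l * f x + (1 - l) * f y.

Definition subgrad (g : vec -> R) (x s : vec) : Prop :=
  forall y : vec, g x + dot s (y - x) <= g y.

Definition is_gradient (f : vec -> R) (x gx : vec) : Prop :=
  forall e : R, 0 < e -> exists2 delta : R, 0 < delta &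
    forall h : vec, enorm h < delta ->
      `|f (x + h) - f x - dot gx h| <= e * enorm h.

Definition is_proj_ball (Rad : R) (y p : vec) : Prop :=
  enorm p <= Rad /\ forall z : vec, enorm z <= Rad -> enorm (y - p) <= enorm (y - z).

(* One step of OGD with Polyak feasibility steps, before projection *)
Definition polyak_point (eta rho gt : R) (gradft st xt : vec) : vec :=
  let yt := xt - eta *: gradft in
  if st == 0 then yt
  else yt - (pos_part (gt + dot st (yt - xt) + rho) / (enorm st ^+ 2)) *: st.

End Defs.

(* Main.v *)
Require Import Defs.
From HB Require Import structures.
From mathcomp Require Import all_boot all_order all_algebra.
From mathcomp Require Import reals ring lra.
Import Order.TTheory GRing.Theory Num.Theory.
Set Implicit Arguments. Unset Strict Implicit. Unset Printing Implicit Defensive.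
Local Open Scope ring_scope.

Section H.
Variables (R : realType) (d : nat).
Implicit Types (u v w : 'rV[R]_d) (a b : R).

Lemma dotC u v : dot u v = dot v u.
Proof. by apply: eq_bigr => i _; rewrite mulrC. Qed.
Lemma dotDl u v w : dot (u + v) w = dot u w + dot v w.
Proof. by rewrite /dot -big_split; apply: eq_bigr => i _; rewrite mxE mulrDl. Qed.
Lemma dotDr u v w : dot w (u + v) = dot w u + dot w v.
Proof. by rewrite dotC dotDl !(dotC w). Qed.
Lemma dotZl a u v : dot (a *: u) v = a * dot u v.
Proof. by rewrite /dot mulr_sumr; apply: eq_bigr => i _; rewrite mxE mulrA. Qed.
Lemma dotZr a u v : dot v (a *: u) = a * dot v u.
Proof. by rewrite dotC dotZl dotC. Qed.
Lemma dotNl u v : dot (- u) v = - dot u v.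
Proof. by rewrite -scaleN1r dotZl mulN1r. Qed.
Lemma dotNr u v : dot v (- u) = - dot v u.
Proof. by rewrite dotC dotNl dotC. Qed.
Lemma dot_ge0 u : 0 <= dot u u.
Proof. by apply: sumr_ge0 => i _; rewrite -expr2 sqr_ge0. Qed.
Lemma enorm_sqr u : enorm u ^+ 2 = dot u u.
Proof. by rewrite sqr_sqrtr // dot_ge0. Qed.
Lemma enorm_ge0 u : 0 <= enorm u.
Proof. exact: sqrtr_ge0. Qed.
Lemma enorm_leE u r : 0 <= r -> (enorm u <= r) = (dot u u <= r ^+ 2).
Proof. by move=> r0; rewrite -enorm_sqr ler_sqr // nnegrE ?enorm_ge0. Qed.
Lemma enorm_le2 u v : enorm u <= enorm v -> dot u u <= dot v v.
Proof. by move=> h; rewrite -!enorm_sqr ler_sqr // nnegrE ?enorm_ge0. Qed.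
Lemma enormZ a u : 0 <= a -> enorm (a *: u) = a * enorm u.
Proof.
move=> a0; rewrite /enorm dotZl dotZr mulrA sqrtrM ?mulr_ge0 //.
by rewrite -expr2 sqrtr_sqr ger0_norm.
Qed.

End H.
Lemma pp_pos (R : realType) (a : R) : 0 <= a -> pos_part a = a.
Proof. move=> h. rewrite /pos_part /Order.max; case: ifP => //; lra. Qed.
Lemma pp_neg (R : realType) (a : R) : a < 0 -> pos_part a = 0.
Proof. move=> h. rewrite /pos_part /Order.max; case: ifP => //; lra. Qed.
Ltac dsimp := repeat first [rewrite dotDl|rewrite dotDr|rewrite dotZl|rewrite dotZr|rewrite dotNl|rewrite dotNr].
Section H2.
Variables (R : realType) (d : nat).
Implicit Types (u v w : 'rV[R]_d) (a b : R).

Lemma proj_ball_ineq (Rad : R) (y p z : 'rV[R]_d) : is_proj_ball Rad y p -> enorm z <= Rad ->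
  dot (p - z) (p - z) <= dot (y - z) (y - z).
Proof.
case=> pR pmin zR.
have R0 : 0 <= Rad by have := enorm_ge0 z; lra.
have [u hu] : exists u, y = p + u by exists (y - p); rewrite addrC subrK.
have [w hw] : exists w, z = p + w by exists (z - p); rewrite addrC subrK.
subst y z.
have pp : dot p p <= Rad^+2 by rewrite -enorm_leE.
have zz := zR; rewrite enorm_leE // in zz.
have ww : 0 <= dot w w := dot_ge0 w.
have cpu : dot u p = dot p u := dotC u p.
have cpw : dot w p = dot p w := dotC w p.
have cuw : dot w u = dot u w := dotC w u.
have key : forall l, 0 < l -> l <= 1 -> 2 * dot u w <= l * dot w w.
  move=> l l0 l1.
  have qR : enorm (p + l *: w) <= Rad.
    rewrite enorm_leE //; move: zz; dsimp; rewrite cpw => zz.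
    have h1 : 0 <= (1 - l) * (Rad^+2 - dot p p) by apply: mulr_ge0; lra.
    have h2 : 0 <= l * (Rad^+2 - (dot p p + dot p w + (dot p w + dot w w))) by apply: mulr_ge0; lra.
    have h3 : 0 <= l * (1 - l) * dot w w by apply: mulr_ge0 => //; apply: mulr_ge0; lra.
    nra.
  have := enorm_le2 (pmin _ qR).
  have -> : p + u - (p + l *: w) = u - l *: w by apply/rowP => i; rewrite !mxE; ring.
  have -> : p + u - p = u by apply/rowP => i; rewrite !mxE; ring.
  dsimp; rewrite cuw => h.
  have h4 : 0 <= l * (l * dot w w - 2 * dot u w) by nra.
  rewrite -subr_ge0; move: h4; rewrite pmulr_rge0 //; lra.
have uw0 : dot u w <= 0.
  case: (lerP (dot u w) 0) => // h.
  pose l := dot u w / (dot u w + dot w w).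
  have s0 : 0 < dot u w + dot w w by lra.
  have l0 : 0 < l by apply: divr_gt0.
  have l1 : l <= 1 by rewrite /l ler_pdivrMr // mul1r; lra.
  have e : l * (dot u w + dot w w) = dot u w by rewrite /l divfK // gt_eqF.
  have := key l l0 l1; have h5 : 0 < l * dot u w by apply: mulr_gt0.
  move: e; rewrite mulrDr; lra.
have -> : p + u - (p + w) = u - w by apply/rowP => i; rewrite !mxE; ring.
have -> : p - (p + w) = - w by apply/rowP => i; rewrite !mxE; ring.
dsimp; rewrite cuw.
have := dot_ge0 u; lra.
Qed.

Lemma polyak_ineq (eta rho gt : R) (gr st xt z : 'rV[R]_d) :
  gt + dot st (z - xt) + rho <= 0 ->
  dot (polyak_point eta rho gt gr st xt - z) (polyak_point eta rho gt gr st xt - z)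
   <= dot (xt - eta *: gr - z) (xt - eta *: gr - z).
Proof.
move=> hyp; rewrite /polyak_point; case: eqP => [_|sn0]; first by [].
move: (xt - eta *: gr) => y.
rewrite enorm_sqr.
set A := gt + dot st (y - xt) + rho.
have K : A <= dot st (y - z) by rewrite /A; move: hyp; dsimp; lra.
set a := pos_part A.
set c := a / dot st st.
have -> : y - c *: st - z = (y - z) - c *: st by apply/rowP => i; rewrite !mxE; ring.
move: K; move: (y - z) => v K.
dsimp; rewrite (dotC v st).
have c0 : 0 <= c.
  rewrite /c divr_ge0 ?dot_ge0 // /a.
  by case: (lerP 0 A) => hA; [rewrite pp_pos | rewrite pp_neg].
case: (lerP 0 A) => hA; last first.
  have -> : c = 0 by rewrite /c /a pp_neg ?mul0r.
  lra.
case: (eqVneq (dot st st) 0) => ss.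
  have -> : c = 0 by rewrite /c ss invr0 mulr0.
  lra.
have e : c * dot st st = A by rewrite /c /a pp_pos // divfK.
have h1 : 0 <= c * (dot st v - A) by apply: mulr_ge0 => //; lra.
have h2 : 0 <= c * A by apply: mulr_ge0.
nra.
Qed.

Lemma grad_ineq (f : 'rV[R]_d -> R) (x gx z : 'rV[R]_d) :
  convex_fun f -> is_gradient f x gx -> f x - f z <= dot gx (x - z).
Proof.
move=> cf gf.
have [v hv] : exists v, z = x + v by exists (z - x); rewrite addrC subrK.
subst z.
have -> : x - (x + v) = - v by apply/rowP => i; rewrite !mxE; ring.
rewrite dotNr.
have n0 := enorm_ge0 v.
have claim : forall e, 0 < e -> dot gx v - (f (x + v) - f x) <= e * enorm v.
  move=> e e0; case: (gf e e0) => del del0 H.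
  pose l := del / (del + 2 * (enorm v + 1)).
  have s0 : 0 < del + 2 * (enorm v + 1) by lra.
  have l0 : 0 < l by apply: divr_gt0.
  have l1 : l <= 1 by rewrite /l ler_pdivrMr // mul1r; lra.
  have el : l * (del + 2 * (enorm v + 1)) = del by rewrite /l divfK // gt_eqF.
  have hn : enorm (l *: v) < del.
    rewrite enormZ ?(ltW l0) //.
    have h1 : 0 < l * del by apply: mulr_gt0.
    move: el; rewrite !mulrDr; nra.
  have := H _ hn; rewrite dotZr enormZ ?(ltW l0) // ler_norml => /andP [Ha Hb].
  have cv := cf (x + v) x l (ltW l0) l1.
  have ex : l *: (x + v) + (1 - l) *: x = x + l *: v by apply/rowP => i; rewrite !mxE; ring.
  rewrite ex in cv.
  have h2 : 0 <= l * (e * enorm v - (dot gx v - (f (x + v) - f x))) by nra.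
  by move: h2; rewrite pmulr_rge0 // subr_ge0.
case: (lerP (dot gx v - (f (x + v) - f x)) 0) => hb; first by lra.
pose e := (dot gx v - (f (x + v) - f x)) / (2 * (enorm v + 1)).
have s0 : 0 < 2 * (enorm v + 1) by lra.
have e0 : 0 < e by apply: divr_gt0.
have ee : e * (2 * (enorm v + 1)) = dot gx v - (f (x + v) - f x) by rewrite /e divfK // gt_eqF.
have := claim e e0.
have h1 : 0 < e by [].
nra.
Qed.
End H2.

Theorem mainTheorem9 (R : realType) (d T : nat)
  (g : 'rV[R]_d -> R) (f : nat -> 'rV[R]_d -> R)
  (grad : nat -> 'rV[R]_d -> 'rV[R]_d)
  (Rad Gf Gg sigma eps eta rho : R)
  (x s : nat -> 'rV[R]_d) (xstar : 'rV[R]_d) :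
  (0 < d)%N -> (0 < T)%N ->
  convex_fun g ->
  (* (A1) *)
  0 < Rad -> (forall y, g y <= 0 -> enorm y <= Rad) ->
  (* (A2) *)
  (forall t, (1 <= t <= T)%N -> convex_fun (f t)) ->
  (forall t, (1 <= t <= T)%N -> forall y, is_gradient (f t) y (grad t y)) ->
  0 < Gf ->
  (forall t y, (1 <= t <= T)%N -> enorm y <= Rad -> enorm (grad t y) <= Gf) ->
  (* (A3) *)
  0 < Gg ->
  (forall y u, enorm y <= Rad -> subgrad g y u -> enorm u <= Gg) ->
  (* (A4) *)
  0 < sigma -> 0 < eps ->
  (exists y, g y = - eps) ->
  (forall y u, g y = - eps -> subgrad g y u -> sigma <= enorm u) ->
  (* algorithm parameters *)
  0 < eta -> 0 <= rho -> rho <= eps ->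
  (* the run of the algorithm *)
  enorm (x 1%N) <= Rad ->
  (forall t, (1 <= t <= T)%N -> subgrad g (x t) (s t)) ->
  (forall t, (1 <= t <= T)%N ->
     is_proj_ball Rad
       (polyak_point eta rho (g (x t)) (grad t (x t)) (s t) (x t))
       (x t.+1)) ->
  (* comparator: a minimizer of the cumulative loss over X_rho *)
  g xstar <= - rho ->
  (forall y, g y <= - rho ->
     \sum_(1 <= t < T.+1) f t xstar <= \sum_(1 <= t < T.+1) f t y) ->
  \sum_(1 <= t < T.+1) (f t (x t) - f t xstar)
    <= 2 * Rad ^+ 2 / eta + eta / 2 * Gf ^+ 2 * T%:R.
Proof.
move=> d0 T0 _ R0 A1 fconv fgrad Gf0 fGf _ _ _ _ _ _ eta0 rho0 _ x1R hsub hproj gz _.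
have inball : forall t, (1 <= t <= T)%N -> enorm (x t) <= Rad.
  case=> [//|[//|k]] /andP [_ hk].
  by case: (hproj k.+1 (ltnW hk)).
have zR : enorm xstar <= Rad by apply: A1; lra.
pose D t := dot (x t - xstar) (x t - xstar).
have step : forall t, (1 <= t <= T)%N ->
    f t (x t) - f t xstar <= (D t - D t.+1) / (2 * eta) + eta / 2 * Gf ^+ 2.
  move=> t ht.
  have h1 := proj_ball_ineq (hproj t ht) zR.
  have hz : g (x t) + dot (s t) (xstar - x t) + rho <= 0.
    have := hsub t ht xstar; lra.
  have h2 := @polyak_ineq R d eta rho (g (x t)) (grad t (x t)) (s t) (x t) xstar hz.
  have h4 := @grad_ineq R d (f t) (x t) (grad t (x t)) xstar (fconv t ht) (fgrad t ht (x t)).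
  have h5 : dot (grad t (x t)) (grad t (x t)) <= Gf ^+ 2.
    by rewrite -enorm_leE ?(ltW Gf0) //; apply: fGf => //; apply: inball.
  have ev : x t - eta *: grad t (x t) - xstar = (x t - xstar) - eta *: grad t (x t).
    by apply/rowP => i; rewrite !mxE; ring.
  move: h2; rewrite ev.
  move: (polyak_point eta rho (g (x t)) (grad t (x t)) (s t) (x t) - xstar) h1 => P h1.
  move: h1 h4; rewrite /D.
  move: (dot (x t.+1 - xstar) (x t.+1 - xstar)) => Dn.
  move: (x t - xstar) (grad t (x t)) h5 => v gr h5 h1 h4 h2.
  move: h2; dsimp; rewrite (dotC v gr) => h2.
  have e2 : 0 < 2 * eta by lra.
  rewrite -(ler_pM2r e2) [X in _ <= X]mulrDl divfK ?gt_eqF //.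
  have hA : 0 <= eta * (dot gr v - (f t (x t) - f t xstar)) by apply: mulr_ge0; lra.
  have hB : 0 <= eta * eta * (Gf ^+ 2 - dot gr gr) by apply: mulr_ge0; [apply: mulr_ge0; lra | lra].
  have -> : eta / 2 * Gf ^+ 2 * (2 * eta) = eta * eta * Gf ^+ 2 by field.
  nra.
apply: le_trans; first by apply: ler_sum_nat => i hi; apply: step.
rewrite big_split /= sumr_const_nat subn1 /= -mulr_suml.
have tel : \sum_(1 <= i < T.+1) (D i - D i.+1) = D 1%N - D T.+1.
  rewrite -[LHS]opprK -sumrN.
  under eq_bigr do rewrite opprB.
  by rewrite telescope_sumr // opprB.
rewrite tel mulr_natr.
have DT : 0 <= D T.+1 := dot_ge0 _.
have D1 : D 1%N <= 4 * Rad ^+ 2.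
  have a1 : dot (x 1%N) (x 1%N) <= Rad ^+ 2 by rewrite -enorm_leE ?(ltW R0).
  have a2 : dot xstar xstar <= Rad ^+ 2 by rewrite -enorm_leE ?(ltW R0).
  have a3 := dot_ge0 (x 1%N + xstar).
  move: a3; rewrite /D; dsimp; rewrite (dotC xstar (x 1%N)); lra.
have -> : 2 * Rad ^+ 2 / eta = (4 * Rad ^+ 2) / (2 * eta) by field; lra.
rewrite lerD2r ler_wpM2r // ?invr_ge0; lra.
Qed.
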